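(* Let $G$ be a finite abelian group with $|G|\ge3$. Then (1) $[1,\mathsf{r}(G)-1]\subset\Delta^{\ast}(G)$; (2) $d-2\in\Delta^{\ast}(G)$ for every $d\ge3$ with $d\mid\exp(G)$; (3) $|n-r-1|\in\Delta^{\ast}(C_n^r)$ for all $n\ge2$, $r\ge1$ with $n\ne r+1$. In particular, $\max\Delta^{\ast}(G)\ge\max\{\mathsf{r}(G)-1,\exp(G)-2\}$.
   Context: For a subset $G_0$ of an abelian group, $\mathcal{B}(G_0)$ is the monoid of zero-sum sequences over $G_0$, with atoms the minimal zero-sum sequences; $\mathsf{L}(B)$ is the set of lengths of factorizations of $B$ into atoms. For $A\subset\mathbb{Z}$, $\Delta(A)$ is the set of $d\in\mathbb{N}$ such that some $l\in A$ has $A\cap[l,l+d]=\{l,l+d\}$, and $\Delta(G_0)=\bigcup_{B\in\mathcal{B}(G_0)}\Delta(\mathsf{L}(B))$. Then $\Delta^{\ast}(G)=\{\min\Delta(G_0): G_0\subset G,\ \Delta(G_0)\ne\emptyset\}$. If $G\cong C_{n_1}\oplus\cdots\oplus C_{n_r}$ with $1<n_1\mid\cdots\mid n_r$, then $\mathsf{r}(G)=r$ and $\exp(G)=n_r$. *)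

(* Defs.v *)
From HB Require Import structures.
From mathcomp Require Import all_boot all_fingroup all_solvable all_algebra.

Set Implicit Arguments.
Unset Strict Implicit.
Unset Printing Implicit Defensive.

(* Sequences over a finite abelian group (written multiplicatively, as
   MathComp finite groups are).  Elements of the free abelian monoid F(G)
   are represented by finite sequences, equality in F(G) being perm_eq. *)

Section ZeroSum.
Variable gT : finGroupType.

Definition zero_sum (s : seq gT) : bool := (\prod_(g <- s) g == 1)%g.

Definition seq_over (G0 : {set gT}) (s : seq gT) : bool := all (mem G0) s.

(* Minimal zero-sum sequence (= atom of B(G0)): nonempty, zero-sum, and no
   proper nonempty subsequence (sub-multiset, i.e. mask m s) is zero-sum. *)
Definition minimal_zero_sum (s : seq gT) : Prop :=
  [/\ s != [::], zero_sum s &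
      forall m : bitseq, zero_sum (mask m s) ->
        mask m s = [::] \/ size (mask m s) = size s].

Definition lengths (B : seq gT) (k : nat) : Prop :=
  exists As : seq (seq gT),
    [/\ size As = k, forall A, A \in As -> minimal_zero_sum A
      & perm_eq (flatten As) B].

End ZeroSum.

Definition delta_set (L : nat -> Prop) (d : nat) : Prop :=
  0 < d /\ exists l, [/\ L l, L (l + d) & forall k, l < k < l + d -> ~ L k].

Definition Delta_of (gT : finGroupType) (G0 : {set gT}) (d : nat) : Prop :=
  exists B : seq gT, [/\ seq_over G0 B, zero_sum B & delta_set (lengths B) d].

Definition Delta_star (gT : finGroupType) (G : {set gT}) (d : nat) : Prop :=
  exists G0 : {set gT},
    [/\ G0 \subset G, Delta_of G0 d & forall d', Delta_of G0 d' -> d <= d'].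

(* Main.v *)
Require Import Defs.
Set Warnings "-notation-overridden -ambiguous-paths".
From HB Require Import structures.
From mathcomp Require Import all_boot all_fingroup all_solvable all_algebra.
From mathcomp Require Import zify.
Set Implicit Arguments. Unset Strict Implicit. Unset Printing Implicit Defensive.

Section Gen.
Variable gT : finGroupType.
Local Open Scope group_scope.

Lemma prod_mulgA (G : {group gT}) m (F1 F2 : nat -> gT) : abelian G ->
  (forall i, i < m -> F1 i \in G) -> (forall i, i < m -> F2 i \in G) ->
  \prod_(i < m) (F1 i * F2 i) = (\prod_(i < m) F1 i) * \prod_(i < m) F2 i.
Proof.
move=> cG; elim: m => [|m IH] h1 h2; first by rewrite !big_ord0 mulg1.
rewrite !big_ord_recr /= IH; last 2 first.
- by move=> i lt; apply: h1; apply: ltnW.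
- by move=> i lt; apply: h2; apply: ltnW.
have P2G : \prod_(i < m) F2 i \in G by apply: group_prod => i _; exact: (h2 _ (ltnW (ltn_ord i))).
have c : commute (\prod_(i < m) F2 i) (F1 m).
  by apply: (centsP cG) => //; apply: h1.
rewrite -!mulgA; congr (_ * _); by rewrite !mulgA c.
Qed.

Lemma prod_delta m (F : nat -> gT) j : j < m ->
  (forall i, i < m -> i != j -> F i = 1) -> \prod_(i < m) F i = F j.
Proof.
elim: m => [//|m IH] ltj h; rewrite big_ord_recr /=.
case: (ltnP j m) => [lt|le].
  rewrite IH //; last by move=> i lt' ne; apply: h => //; apply: ltnW.
  by rewrite (h m) ?mulg1 // gtn_eqF.
have Hjm : j = m by apply/eqP; rewrite eqn_leq le andbT -ltnS.
subst j; rewrite big1 ?mul1g // => i _.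
apply: h; first exact: ltnW (ltn_ord i).
by rewrite ltn_eqF.
Qed.

End Gen.

Lemma sum_delta m j : j < m -> \sum_(i < m) (j == i) = 1.
Proof.
move=> ltj; rewrite (bigD1 (Ordinal ltj)) //= eqxx big1 // => i ne.
by apply/eqP; rewrite eqb0; apply: contra ne => /eqP E; apply/eqP/val_inj.
Qed.

Lemma mod_addl0 l d k : l + d = l %[mod k] -> d %% k = 0.
Proof.
have E : l = l + 0 by rewrite addn0.
by rewrite {2}E => /eqP; rewrite eqn_modDl mod0n => /eqP.
Qed.

Section Core.
Variables (gT : finGroupType) (G : {group gT}) (n m s : nat) (e : nat -> gT).
Hypothesis cG : abelian G.
Hypothesis eG : forall i, i < m -> e i \in G.
Hypothesis n2 : 1 < n.
Hypothesis ind : forall a : nat -> nat,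
  (\prod_(i < m) e i ^+ a i == 1)%g = [forall i : 'I_m, n %| a i].
Hypothesis hs : forall i, i < m -> exists2 j, j < m & (j == i) %% n != s %% n.

Local Open Scope group_scope.

Definition Phi (a : nat -> nat) := \prod_(i < m) e i ^+ a i.

Lemma PhiD a b : Phi (fun i => a i + b i) = Phi a * Phi b.
Proof.
rewrite /Phi -(@prod_mulgA _ G m (fun i => e i ^+ a i) (fun i => e i ^+ b i)) //.
- by apply: eq_bigr => i _; rewrite expgD.
- by move=> i lt; rewrite groupX // eG.
- by move=> i lt; rewrite groupX // eG.
Qed.

Lemma Phi_ext a b : (forall i, i < m -> a i = b i) -> Phi a = Phi b.
Proof. by move=> h; apply: eq_bigr => i _; rewrite h. Qed.

Lemma Phi_eq1 a : Phi a = 1 <-> forall i, i < m -> n %| a i.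
Proof.
split=> [/eqP|h]; first by rewrite /Phi ind => /forallP h i lt; exact: (h (Ordinal lt)).
by apply/eqP; rewrite /Phi ind; apply/forallP => i; apply: h.
Qed.

Lemma Phi_mod a b : Phi a = Phi b -> forall i, i < m -> a i = b i %[mod n].
Proof.
move=> E.
have h1 : Phi (fun i => a i + n.-1 * b i) = 1.
  rewrite PhiD E -PhiD; apply/Phi_eq1 => i _.
  by rewrite -{1}(mul1n (b i)) -mulnDl add1n prednK ?(ltnW n2) // dvdn_mulr.
move/Phi_eq1: h1 => h1 i lt; apply/eqP.
rewrite -(eqn_modDr (n.-1 * b i)).
have := h1 i lt; rewrite /dvdn => /eqP ->.
by rewrite -{1}(mul1n (b i)) -mulnDl add1n prednK ?(ltnW n2) // modnMr.
Qed.

Lemma e_as_Phi j : j < m -> e j = Phi (fun i => (i == j)).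
Proof.
move=> lt; rewrite /Phi (@prod_delta _ m (fun i => e i ^+ (i == j)) j lt) /=.
  by rewrite eqxx expg1.
by move=> i _ /negbTE ->; rewrite expg0.
Qed.

Definition g := Phi (fun _ => s).

Lemma e_neq_g i : i < m -> e i != g.
Proof.
move=> lt; apply/eqP => E; have [j ltj ne] := hs lt.
rewrite (e_as_Phi lt) in E; have := Phi_mod E ltj.
by move=> h; rewrite h eqxx in ne.
Qed.

Lemma e_inj i j : i < m -> j < m -> (e i == e j) = (i == j).
Proof.
move=> lti ltj; apply/eqP/eqP => [E|->//].
rewrite (e_as_Phi lti) (e_as_Phi ltj) in E; have := Phi_mod E lti.
rewrite eqxx; case: eqP => // _; rewrite mod0n modn_small //.
Qed.

Definition G0 : {set gT} := g |: [set e (nat_of_ord i) | i : 'I_m].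

Lemma G0P x : x \in G0 -> x = g \/ exists2 j, j < m & x = e j.
Proof.
rewrite !inE => /orP [/eqP->|/imsetP [i _ ->]]; [by left | by right; exists i].
Qed.

Lemma g_in : g \in G0. Proof. by rewrite !inE eqxx. Qed.
Lemma e_in j : j < m -> e j \in G0.
Proof. by move=> lt; rewrite !inE; apply/orP; right; apply/imsetP; exists (Ordinal lt). Qed.

Lemma gG : g \in G.
Proof. by apply: group_prod => i _; rewrite groupX // eG. Qed.

Lemma G0G : G0 \subset G.
Proof. by apply/subsetP => x /G0P [->|[j lt ->]]; [exact: gG | exact: eG]. Qed.

Definition cg (S : seq gT) := count_mem g S.
Definition ce i (S : seq gT) := count_mem (e i) S.
Definition av S i := ce i S + s * cg S.

Lemma prodS S : seq_over G0 S -> \prod_(x <- S) x = Phi (av S).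
Proof.
elim: S => [_|x S IH /andP[xG0 SG0]].
  by rewrite big_nil; symmetry; apply/Phi_eq1 => i _; rewrite /av /ce /cg /= muln0.
rewrite big_cons IH //; case: (G0P xG0) => [->|[j ltj ->]].
- rewrite /g -PhiD; apply: Phi_ext => i lt; rewrite /av /cg /ce /=.
  rewrite eqxx eq_sym (negbTE (e_neq_g lt)) /=; lia.
- rewrite [in e j * _](e_as_Phi ltj) -PhiD; apply: Phi_ext => i lt; rewrite /av /cg /ce /=.
  rewrite (e_inj ltj lt) (negbTE (e_neq_g ltj)) [j == i]eq_sym /=; lia.
Qed.

Lemma zsP S : seq_over G0 S -> zero_sum S <-> forall i, i < m -> n %| av S i.
Proof.
move=> h; rewrite /zero_sum prodS //; split=> [/eqP /Phi_eq1 //|H].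
by apply/eqP/Phi_eq1.
Qed.

Lemma sizeS S : seq_over G0 S -> size S = cg S + \sum_(i < m) ce i S.
Proof.
elim: S => [|x S IH /andP[xG0 SG0]]; first by rewrite /= big1.
rewrite [size _]/= IH //; case: (G0P xG0) => [->|[j ltj ->]].
- have -> : \sum_(i < m) ce i (g :: S) = \sum_(i < m) ce i S.
    by apply: eq_bigr => i _; rewrite /ce /= eq_sym (negbTE (e_neq_g (ltn_ord i))).
  rewrite /cg /= eqxx; lia.
- have -> : \sum_(i < m) ce i (e j :: S) = 1 + \sum_(i < m) ce i S.
    rewrite -(sum_delta ltj) -big_split /=; apply: eq_bigr => i _.
    by rewrite /ce /= (e_inj ltj (ltn_ord i)).
  rewrite /cg /= (negbTE (e_neq_g ltj)); lia.
Qed.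


Local Close Scope group_scope.

Lemma over_mem S x : seq_over G0 S -> x \notin G0 -> count_mem x S = 0.
Proof. by move=> /allP h nx; apply/count_memPn; apply: contra nx => /h. Qed.

Lemma count_le S1 S2 : seq_over G0 S1 -> cg S1 <= cg S2 ->
  (forall i, i < m -> ce i S1 <= ce i S2) ->
  forall x, count_mem x S1 <= count_mem x S2.
Proof.
move=> h1 hg he x; case: (boolP (x \in G0)) => [/G0P [->|[j lt ->]]|nx] //.
- exact: he.
- by rewrite over_mem.
Qed.

Lemma perm_counts S1 S2 : seq_over G0 S1 -> seq_over G0 S2 -> cg S1 = cg S2 ->
  (forall i, i < m -> ce i S1 = ce i S2) -> perm_eq S1 S2.
Proof.
move=> h1 h2 hg he; apply/allP => x _; apply/eqP.
case: (boolP (x \in G0)) => [/G0P [->|[j lt ->]]|nx] //.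
- exact: he.
- by rewrite !over_mem.
Qed.

Lemma perm_over S1 S2 : perm_eq S1 S2 -> seq_over G0 S2 -> seq_over G0 S1.
Proof. by move=> pe /allP h; apply/allP => x; rewrite (perm_mem pe) => /h. Qed.

Lemma zs_perm S1 S2 : perm_eq S1 S2 -> seq_over G0 S2 -> zero_sum S2 -> zero_sum S1.
Proof.
move=> pe h2 z2; have h1 := perm_over pe h2.
apply/(zsP h1) => i lt; move/(zsP h2): z2 => /(_ i lt).
by rewrite /av /ce /cg !(seq.permP pe).
Qed.

Lemma min_counts W : seq_over G0 W -> zero_sum W -> W != [::] ->
  (forall t (u : nat -> nat), t <= cg W -> (forall i, i < m -> u i <= ce i W) ->
     (forall i, i < m -> n %| u i + s * t) ->
     (t = 0 /\ forall i, i < m -> u i = 0) \/ (t = cg W /\ forall i, i < m -> u i = ce i W)) ->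
  minimal_zero_sum W.
Proof.
move=> WG0 zW nW H; split => // msk zT.
have TG0 : seq_over G0 (mask msk W) by apply: all_mask.
have sub := mask_subseq msk W.
have := H (cg (mask msk W)) (fun i => ce i (mask msk W)).
case.
- exact: leq_count_subseq.
- by move=> i _; apply: leq_count_subseq.
- by move=> i lt; have := (zsP TG0).1 zT i lt.
- move=> [t0 u0]; left; apply/eqP; rewrite -size_eq0 sizeS // t0 big1 //.
  by move=> i _; apply: u0.
- move=> [t1 u1]; right; rewrite !sizeS // t1; congr (_ + _).
  by apply: eq_bigr => i _; apply: u1.
Qed.

Lemma atom_sub A T : seq_over G0 A -> minimal_zero_sum A -> seq_over G0 T ->
  zero_sum T -> T != [::] -> cg T <= cg A -> (forall i, i < m -> ce i T <= ce i A) ->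
  size A = size T /\ cg A = cg T.
Proof.
move=> AG0 [nA zA minA] TG0 zT nT hg he.
have [T' sub pe] := (count_subseqP T A).1 (count_le TG0 hg he).
have [msk _ defT'] := subseqP sub.
have T'G0 : seq_over G0 T' by rewrite defT'; apply: all_mask.
have zT' : zero_sum T' by apply: (zs_perm _ TG0 zT); rewrite perm_sym.
have := minA msk; rewrite -defT' => /(_ zT') [E|E].
  by move: nT; rewrite -size_eq0 (perm_size pe) E.
have eA : T' = A by apply/eqP; rewrite -(size_subseq_leqif sub) E.
by rewrite -eA (perm_size pe) /cg (seq.permP pe).
Qed.

Definition Es := mkseq e m.

Lemma Es_over : seq_over G0 Es.
Proof. by apply/allP => x /mapP [j]; rewrite mem_iota add0n => /andP [_ lt] ->; apply: e_in. Qed.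

Lemma cg_Es : cg Es = 0.
Proof.
apply/count_memPn; apply/negP => /mapP [j]; rewrite mem_iota add0n => /andP [_ lt] E.
by move: (e_neq_g lt); rewrite E eqxx.
Qed.

Lemma ce_Es i : i < m -> ce i Es = 1%N.
Proof.
move=> lt; rewrite /ce /Es /mkseq count_map.
rewrite (@eq_in_count _ _ (pred1 i)); last first.
  by move=> j; rewrite mem_iota add0n => /andP [_ ltj] /=; rewrite (e_inj ltj lt).
by rewrite count_uniq_mem ?iota_uniq // mem_iota add0n lt.
Qed.

Definition mkT t u := nseq t g ++ flatten (nseq u Es).

Lemma mkT_over t u : seq_over G0 (mkT t u).
Proof.
rewrite /seq_over all_cat; apply/andP; split.
  by apply/allP => x; rewrite mem_nseq => /andP [_ /eqP ->]; apply: g_in.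
apply/allP => x /flattenP [y]; rewrite mem_nseq => /andP [_ /eqP ->] xE.
exact: (allP Es_over).
Qed.

Lemma cg_mkT t u : cg (mkT t u) = t.
Proof.
by rewrite /cg count_cat count_nseq /= eqxx count_flatten map_nseq sumn_nseq -/(cg Es) cg_Es; lia.
Qed.

Lemma ce_mkT t u i : i < m -> ce i (mkT t u) = u.
Proof.
move=> lt; rewrite /ce count_cat count_nseq /= eq_sym (negbTE (e_neq_g lt)).
by rewrite count_flatten map_nseq sumn_nseq -/(ce i Es) ce_Es //; lia.
Qed.

Lemma mkT_nil t u : 0 < t -> mkT t u != [::].
Proof. by case: t. Qed.

Lemma size_mkT t u : size (mkT t u) = t + m * u.
Proof.
rewrite sizeS ?mkT_over // cg_mkT (eq_bigr (fun _ => u)).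
  by rewrite sum_nat_const card_ord.
by move=> i _; rewrite ce_mkT.
Qed.

Lemma zs_mkT t u : (forall i, i < m -> n %| u + s * t) -> zero_sum (mkT t u).
Proof.
move=> h; apply/(zsP (mkT_over t u)) => i lt.
by rewrite /av ce_mkT // cg_mkT; exact: h i lt.
Qed.

Definition F c S := size S + c * cg S.

Lemma F_flatten c As : F c (flatten As) = sumn (map (F c) As).
Proof.
elim: As => [|A As IH]; first by rewrite /F /cg /= muln0.
rewrite /= -IH /F size_cat /cg count_cat; lia.
Qed.

Section Crit.
Variables (c k : nat).
Hypothesis k0 : 0 < k.
Hypothesis Fatom : forall A, seq_over G0 A -> minimal_zero_sum A -> F c A = n %[mod n * k].

Lemma F_lengths B l : seq_over G0 B -> lengths B l -> F c B = l * n %[mod n * k].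
Proof.
move=> BG0 [As [<- hA pe]].
have -> : F c B = F c (flatten As) by rewrite /F /cg (perm_size pe) (seq.permP pe).
have hAs : forall A, A \in As -> seq_over G0 A.
  move=> A AAs; apply/allP => x xA; have : x \in flatten As by apply/flattenP; exists A.
  by rewrite (perm_mem pe); apply/allP.
elim: As hA hAs {pe} => [|A As IH] hA hAs; first by rewrite /F /cg /= muln0.
have -> : F c (flatten (A :: As)) = F c A + F c (flatten As).
  by rewrite /F /cg /= size_cat count_cat; lia.
rewrite -modnDm Fatom; last 2 first.
- by apply: hAs; rewrite inE eqxx.
- by apply: hA; rewrite inE eqxx.
rewrite IH; last 2 first.
- by move=> A' h; apply: hA; rewrite inE h orbT.
- by move=> A' h; apply: hAs; rewrite inE h orbT.
by rewrite modnDm mulSn.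
Qed.

Lemma lengths_mod B l1 l2 : seq_over G0 B -> lengths B l1 -> lengths B l2 ->
  l1 = l2 %[mod k].
Proof.
move=> BG0 L1 L2; have := F_lengths BG0 L1; rewrite (F_lengths BG0 L2) => E.
apply/eqP; rewrite -(@eqn_pmul2r n) ?(ltnW n2) //.
by rewrite !muln_modl [(k * n)%N]mulnC E.
Qed.

Lemma delta_min d : Delta_of G0 d -> k <= d.
Proof.
move=> [B [BG0 zB [d0 [l [L1 L2 _]]]]].
have := lengths_mod BG0 L1 L2; rewrite -{1}(addn0 l) => /eqP.
rewrite eqn_modDl mod0n eq_sym -/(dvdn k d) => dk.
exact: dvdn_leq.
Qed.

Lemma delta_in B l : seq_over G0 B -> zero_sum B -> lengths B l -> lengths B (l + k) ->
  Delta_of G0 k.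
Proof.
move=> BG0 zB L1 L2; exists B; split => //; split => //; exists l; split => //.
move=> k' /andP [lt1 lt2] Lk.
have := lengths_mod BG0 Lk L1.
have -> : k' = l + (k' - l) by lia.
move/mod_addl0; rewrite modn_small; first by lia.
lia.
Qed.

Lemma star_of : Delta_of G0 k -> Delta_star G k.
Proof. by move=> D; exists G0; split => //; [apply: G0G | apply: delta_min]. Qed.

End Crit.


Lemma dvd_cases x : n %| x -> x <= n -> x = 0 \/ x = n.
Proof.
case/dvdnP => q ->; have n0 : 0 < n := ltnW n2.
case: q => [|[|q]] /=; [by left|by right; rewrite mul1n|].
move=> h; exfalso; move: h; rewrite !mulSn; lia.
Qed.

Definition en j := nseq n (e j).

Lemma en_over j : j < m -> seq_over G0 (en j).
Proof. by move=> lt; apply/allP => x; rewrite mem_nseq => /andP [_ /eqP ->]; apply: e_in. Qed.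

Lemma cg_en j : j < m -> cg (en j) = 0.
Proof. by move=> lt; rewrite /cg count_nseq /= (negbTE (e_neq_g lt)). Qed.

Lemma ce_en j i : j < m -> i < m -> ce i (en j) = (j == i) * n.
Proof. by move=> ltj lti; rewrite /ce count_nseq /= (e_inj ltj lti). Qed.

Lemma zs_en j : j < m -> zero_sum (en j).
Proof.
move=> lt; apply/(zsP (en_over lt)) => i lti.
by rewrite /av ce_en // cg_en // muln0 addn0 dvdn_mull.
Qed.

Lemma modq a q d : a + q * d = a %[mod d].
Proof. by rewrite addnC modnMDl. Qed.

Lemma atom_class A : seq_over G0 A -> minimal_zero_sum A ->
  [\/ size A = n /\ cg A = n, size A = n /\ cg A = 0 | 0 < cg A < n].
Proof.
move=> AG0 mA; have [nA zA _] := mA.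
have zi := (zsP AG0).1 zA.
case: (leqP n (cg A)) => hn.
  have [E1 E2] := atom_sub AG0 mA (mkT_over n 0) (zs_mkT (t:=n) (u:=0) (fun i _ => dvdn_mull _ (dvdnn n)))
    ltac:(by apply: mkT_nil; lia) ltac:(by rewrite cg_mkT)
    ltac:(by move=> i lt; rewrite ce_mkT).
  by constructor 1; rewrite E1 E2 size_mkT cg_mkT muln0 addn0.
case: (posnP (cg A)) => h0; last by constructor 3; apply/andP.
constructor 2; split => //.
case: A nA AG0 mA zi h0 hn {zA} => [//|x A'] _ AG0 mA zi h0 hn.
have xG0 : x \in G0 by move: AG0 => /andP [].
have [xg|[j ltj xe]] := G0P xG0.
  by move: h0; rewrite /cg /= xg eqxx.
have cj : 0 < ce j (x :: A') by rewrite /ce /= xe eqxx.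
have nj : n <= ce j (x :: A').
  by apply: dvdn_leq => //; have := zi j ltj; rewrite /av h0 muln0 addn0.
have [E1 _] := atom_sub AG0 mA (en_over ltj) (zs_en ltj)
  ltac:(by rewrite -size_eq0 size_nseq; lia) ltac:(by rewrite cg_en // h0)
  ltac:(by move=> i lt; rewrite ce_en //; case: eqP => [<-|]; rewrite ?mul1n ?mul0n).
by rewrite E1 size_nseq.
Qed.

Lemma sumn_iota f : sumn (map f (iota 0 m)) = \sum_(j < m) f j.
Proof. by rewrite sumnE big_map -(big_mkord xpredT f) /index_iota subn0. Qed.

Lemma fact1 : 0 < m -> (forall t, n %| s * t -> n %| t) -> lengths (mkT n n) m.+1.
Proof.
move=> m0 cop.
exists (mkT n 0 :: map en (iota 0 m)); split.
- by rewrite /= size_map size_iota.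
- move=> A; rewrite inE => /orP [/eqP ->|/mapP [j]].
  + apply: min_counts; [exact: mkT_over|apply: zs_mkT => i _; exact: dvdn_mull|
      by apply: mkT_nil; lia|].
    move=> t u; rewrite cg_mkT => tn ui dv.
    have u0 : forall i, i < m -> u i = 0.
      by move=> i lt; have := ui i lt; rewrite ce_mkT //; case: (u i).
    have := dv 0 m0; rewrite u0 // add0n => /cop /dvd_cases /(_ tn) [t0|t1].
      by left.
    by right; split => // i lt; rewrite u0 // ce_mkT.
  + rewrite mem_iota add0n => /andP [_ ltj] ->.
    apply: min_counts; [exact: en_over|exact: zs_en|by rewrite -size_eq0 size_nseq; lia|].
    move=> t u; rewrite cg_en // leqn0 => /eqP t0 ui dv.
    have ui0 : forall i, i < m -> i != j -> u i = 0.
      by move=> i lt ne; have := ui i lt; rewrite ce_en // eq_sym (negbTE ne) mul0n; case: (u i).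
    have uj_le : u j <= n by have := ui j ltj; rewrite ce_en // eqxx mul1n.
    have := dv j ltj; rewrite t0 muln0 addn0 => /dvd_cases /(_ uj_le).
    case=> [uj|uj]; [left|right]; split=> // i lt; case: (eqVneq i j) => [->//|ne].
    * by rewrite ui0.
    * by rewrite uj ce_en // eqxx mul1n.
    * by rewrite ui0 // ce_en // eq_sym (negbTE ne).
- have FO : seq_over G0 (flatten (mkT n 0 :: map en (iota 0 m))).
    apply/allP => x /flattenP [y]; rewrite inE => /orP [/eqP ->|/mapP [j]].
      by apply/allP; apply: mkT_over.
    by rewrite mem_iota add0n => /andP [_ lt] -> ; apply/allP; apply: en_over.
  apply: perm_counts => //; first exact: mkT_over.
  + rewrite /cg count_flatten /= -map_comp sumn_iota.
    rewrite (_ : count_mem g (mkT n 0) = n); last exact: cg_mkT.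
    rewrite (_ : count_mem g (mkT n n) = n); last exact: cg_mkT.
    rewrite big1 ?addn0 // => j _ /=; exact: (cg_en (ltn_ord j)).
  + move=> i lt; rewrite /ce count_flatten /= -map_comp sumn_iota.
    rewrite (_ : count_mem (e i) (mkT n 0) = 0); last exact: (ce_mkT n 0 lt).
    rewrite (_ : count_mem (e i) (mkT n n) = n); last exact: (ce_mkT n n lt).
    rewrite (eq_bigr (fun j : 'I_m => (i == j) * n)); last first.
      by move=> j _ /=; rewrite -/(ce i (en j)) ce_en // eq_sym.
    by rewrite -big_distrl /= sum_delta // mul1n add0n.
Qed.

Lemma dv_pred t : n %| (n - 1) * t -> n %| t.
Proof.
move=> h; have : n %| (n - 1) * t + t by rewrite -{2}(mul1n t) -mulnDl subnK ?(ltnW n2) // dvdn_mulr.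
by rewrite dvdn_addr.
Qed.

Lemma fact_minus : s = (n - 1) -> lengths (mkT n n) n.
Proof.
move=> sE.
exists (nseq n (mkT 1 1)); split.
- by rewrite size_nseq.
- move=> A; rewrite mem_nseq => /andP [_ /eqP ->].
  apply: min_counts; [exact: mkT_over| |by apply: mkT_nil; lia|].
    by apply: zs_mkT => i _; rewrite sE muln1 addnC subnK ?(ltnW n2).
  move=> t u; rewrite cg_mkT => t1 ui dv.
  case: t t1 dv => [|[|//]] _ dv; [left|right]; split=> // i lt.
  + have := ui i lt; have := dv i lt; rewrite ce_mkT // muln0 addn0.
    case: (u i) => [//|[|//]]; rewrite dvdn1; lia.
  + rewrite ce_mkT //; have := ui i lt; have := dv i lt; rewrite ce_mkT // sE muln1.
    case: (u i) => [|[//|//]]; rewrite add0n => /dvdn_leq; lia.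
- apply: perm_counts; [|exact: mkT_over| |].
  + by apply/allP => x /flattenP [y]; rewrite mem_nseq => /andP [_ /eqP ->] xin; exact: (allP (mkT_over 1 1)).
  + rewrite /cg count_flatten map_nseq sumn_nseq.
    rewrite (_ : count_mem g (mkT 1 1) = 1); last exact: (cg_mkT 1 1).
    rewrite (_ : count_mem g (mkT n n) = n); last exact: cg_mkT.
    by rewrite mul1n.
  + move=> i lt; rewrite /ce count_flatten map_nseq sumn_nseq.
    rewrite (_ : count_mem (e i) (mkT 1 1) = 1); last exact: (ce_mkT 1 1 lt).
    rewrite (_ : count_mem (e i) (mkT n n) = n); last exact: (ce_mkT n n lt).
    by rewrite mul1n.
Qed.

Lemma fact_plus : s = 1 -> 0 < m -> lengths (mkT n n) 2.
Proof.
move=> sE m0.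
exists [:: mkT 1 (n - 1); mkT (n - 1) 1]; split => //.
- move=> A; rewrite !inE => /orP [/eqP ->|/eqP ->].
  + apply: min_counts; [exact: mkT_over| |by apply: mkT_nil; lia|].
      by apply: zs_mkT => i _; rewrite sE muln1 subnK ?(ltnW n2).
    move=> t u; rewrite cg_mkT => t1 ui dv.
    case: t t1 dv => [|[|//]] _ dv; [left|right]; split=> // i lt.
    * have := ui i lt; have := dv i lt; rewrite ce_mkT // muln0 addn0 => d l.
      by have [//|E] := dvd_cases d ltac:(lia); lia.
    * rewrite ce_mkT //; have := ui i lt; have := dv i lt; rewrite ce_mkT // sE muln1 => d l.
      have [E|E] := dvd_cases d ltac:(lia); lia.
  + apply: min_counts; [exact: mkT_over| |by apply: mkT_nil; lia|].
      by apply: zs_mkT => i _; rewrite sE mul1n addnC subnK ?(ltnW n2).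
    move=> t u; rewrite cg_mkT => t1 ui dv.
    have ub : forall i, i < m -> u i <= 1 by move=> i lt; have := ui i lt; rewrite ce_mkT.
    have := dv 0 m0; rewrite sE mul1n => d0.
    have [E0|E0] := dvd_cases d0 ltac:(have := ub 0 m0; lia).
      left; split; first by lia.
      move=> i lt; have := dv i lt; rewrite sE mul1n (_ : t = 0) ?addn0; last by lia.
      by move=> d; have [//|E] := dvd_cases d ltac:(have := ub i lt; lia); have := ub i lt; lia.
    have ub0 := ub 0 m0.
    right; split; first by lia.
    move=> i lt; rewrite ce_mkT //; have := dv i lt; rewrite sE mul1n (_ : t = (n - 1)); last by lia.
    move=> d; have [E|E] := dvd_cases d ltac:(have := ub i lt; lia); have := ub i lt; lia.
- apply: perm_counts; [|exact: mkT_over| |].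
  + rewrite (_ : flatten [:: mkT 1 (n - 1); mkT (n - 1) 1] = mkT 1 (n - 1) ++ mkT (n - 1) 1); last by rewrite /= cats0.
    rewrite /seq_over all_cat; apply/andP; split; [exact: (mkT_over 1 (n - 1))|exact: (mkT_over (n - 1) 1)].
  + rewrite (_ : flatten [:: mkT 1 (n - 1); mkT (n - 1) 1] = mkT 1 (n - 1) ++ mkT (n - 1) 1); last by rewrite /= cats0.
    rewrite /cg count_cat.
    rewrite (_ : count_mem g (mkT 1 (n - 1)) = 1); last exact: (cg_mkT 1 (n - 1)).
    rewrite (_ : count_mem g (mkT (n - 1) 1) = n - 1); last exact: (cg_mkT (n - 1) 1).
    rewrite (_ : count_mem g (mkT n n) = n); last exact: (cg_mkT n n).
    lia.
  + move=> i lt.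
    rewrite (_ : flatten [:: mkT 1 (n - 1); mkT (n - 1) 1] = mkT 1 (n - 1) ++ mkT (n - 1) 1); last by rewrite /= cats0.
    rewrite /ce count_cat.
    rewrite (_ : count_mem (e i) (mkT 1 (n - 1)) = n - 1); last exact: (ce_mkT 1 (n - 1) lt).
    rewrite (_ : count_mem (e i) (mkT (n - 1) 1) = 1); last exact: (ce_mkT (n - 1) 1 lt).
    rewrite (_ : count_mem (e i) (mkT n n) = n); last exact: (ce_mkT n n lt).
    lia.
Qed.

Theorem core_plus : 1 < m -> s = 1 -> Delta_star G (m - 1).
Proof.
move=> m2 sE; have k0 : 0 < m - 1 by lia.
have Fatom : forall A, seq_over G0 A -> minimal_zero_sum A ->
    F (m - 1) A = n %[mod n * (m - 1)].
  move=> A AG0 mA; case: (atom_class AG0 mA) => [[sA cA]|[sA cA]|/andP [t0 tn]].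
  - rewrite /F sA cA.
    have -> : n + (m - 1) * n = n + 1 * (n * (m - 1)) by rewrite mul1n mulnC.
    exact: modq.
  - by rewrite /F sA cA muln0 addn0.
  - have zi := (zsP AG0).1 (let: And3 _ z _ := mA in z).
    have hT : forall i, i < m -> ce i (mkT (cg A) (n - cg A)) <= ce i A.
      move=> i lt; rewrite ce_mkT //; have := zi i lt; rewrite /av sE mul1n => d.
      have h : n <= ce i A + cg A by apply: dvdn_leq => //; lia.
      lia.
    have [E1 E2] := atom_sub AG0 mA (mkT_over _ _)
      (zs_mkT (t := cg A) (u := n - cg A) ltac:(by move=> i _; rewrite sE mul1n subnK // ltnW))
      ltac:(by apply: mkT_nil; lia) ltac:(by rewrite cg_mkT) hT.
    rewrite /F E1 size_mkT.
    have -> : cg A + m * (n - cg A) + (m - 1) * cg A = n + 1 * (n * (m - 1)).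
      have : cg A <= n by lia.
      move: (cg A) => t tle; rewrite mul1n mulnBr mulnBl mulnBr muln1 mul1n.
      nia.
    by rewrite modq.
apply: (star_of k0 Fatom).
apply: (@delta_in _ _ k0 Fatom (mkT n n) 2).
- exact: mkT_over.
- by apply: zs_mkT => i _; rewrite sE mul1n dvdn_add ?dvdnn.
- by apply: fact_plus => //; lia.
have -> : 2 + (m - 1) = m.+1 by lia.
apply: fact1; [lia|by move=> t; rewrite sE mul1n].
Qed.

Theorem core_minus : 0 < m -> s = (n - 1) -> n != m.+1 ->
  Delta_star G (if m.+1 <= n then n - m.+1 else m.+1 - n).
Proof.
move=> m0 sE nm.
set k := (if m.+1 <= n then n - m.+1 else m.+1 - n).
have k0 : 0 < k by rewrite /k; case: ifP; lia.
set c := (if m.+1 <= n then k else (n - 1) * k).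
have Fatom : forall A, seq_over G0 A -> minimal_zero_sum A -> F c A = n %[mod n * k].
  move=> A AG0 mA; case: (atom_class AG0 mA) => [[sA cA]|[sA cA]|/andP [t0 tn]].
  - rewrite /F sA cA /c; case: ifP => _.
      have -> : n + k * n = n + 1 * (n * k) by rewrite mul1n mulnC.
      exact: modq.
    have -> : n + (n - 1) * k * n = n + (n - 1) * (n * k) by rewrite [n * k]mulnC mulnA.
    exact: modq.
  - by rewrite /F sA cA muln0 addn0.
  - have zi := (zsP AG0).1 (let: And3 _ z _ := mA in z).
    have hT : forall i, i < m -> ce i (mkT 1 1) <= ce i A.
      move=> i lt; rewrite ce_mkT //; have := zi i lt; rewrite /av sE.
      case: (ce i A) => [|//]; rewrite add0n => /dv_pred /dvdn_leq; lia.
    have [E1 E2] := atom_sub AG0 mA (mkT_over _ _)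
      (zs_mkT (t := 1) (u := 1) ltac:(by move=> i _; rewrite sE muln1 addnC subnK ?(ltnW n2)))
      ltac:(by apply: mkT_nil; lia) ltac:(by rewrite cg_mkT) hT.
    rewrite /F E1 size_mkT E2 cg_mkT !muln1 /c; case: ifP => h;
      have kE : k = (if m.+1 <= n then n - m.+1 else m.+1 - n) by [];
      rewrite h in kE; rewrite kE.
      have -> : 1 + m + (n - m.+1) = n + 0 * (n * (n - m.+1)) by lia.
      exact: modq.
    have -> : 1 + m + (n - 1) * (m.+1 - n) = n + 1 * (n * (m.+1 - n)).
      have hnm : n <= m by move/negbT: h; rewrite -ltnNge ltnS.
      have -> : m.+1 - n = (m - n).+1 by lia.
      have -> : m = (m - n) + n by lia.
      move: (m - n) => a; rewrite (_ : a + n - n = a); last by lia.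
      case: n n2 {h hnm nm k0 zi hT E1 E2 t0 tn AG0 mA sE} => [//|n'] _.
      rewrite subSS subn0; nia.
    exact: modq.
have Bz : zero_sum (mkT n n) by apply: zs_mkT => i _; rewrite dvdn_add // dvdn_mull.
have cop : forall t, n %| s * t -> n %| t by move=> t; rewrite sE; exact: dv_pred.
apply: (star_of k0 Fatom).
have kE : k = (if m.+1 <= n then n - m.+1 else m.+1 - n) by [].
case h : (m.+1 <= n); rewrite h in kE.
  apply: (@delta_in _ _ k0 Fatom (mkT n n) m.+1); [exact: (mkT_over n n)|exact: Bz|exact: fact1|].
  by rewrite kE subnKC //; exact: fact_minus.
apply: (@delta_in _ _ k0 Fatom (mkT n n) n); [exact: (mkT_over n n)|exact: Bz|exact: fact_minus|].
have hnm : n <= m.+1 by move/negbT: h; rewrite -ltnNge => /ltnW.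
rewrite kE subnKC //; exact: fact1.
Qed.

End Core.

Lemma hs_minus n m i : 2 < n -> i < m ->
  exists2 j, j < m & (j == i) %% n != (n - 1) %% n.
Proof.
move=> n3 lt; exists i => //; rewrite eqxx /=.
have -> : 1 %% n = 1 by apply: modn_small; lia.
have -> : (n - 1) %% n = n - 1 by apply: modn_small; lia.
lia.
Qed.

Lemma hs_plus n m i : 1 < n -> 1 < m -> i < m ->
  exists2 j, j < m & (j == i) %% n != 1 %% n.
Proof.
move=> n2 m2 lt; exists (i == 0%N) => /=; first by case: (i == 0%N); lia.
have -> : 1 %% n = 1 by apply: modn_small; lia.
by case: i lt => [|i] _ /=; rewrite mod0n.
Qed.

Section Apps.
Local Open Scope group_scope.

Lemma ind_sub (gT : finGroupType) (e : nat -> gT) n r m : m <= r ->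
  (forall a : nat -> nat, (\prod_(i < r) e i ^+ a i == 1)%g = [forall i : 'I_r, n %| a i]) ->
  forall a : nat -> nat, (\prod_(i < m) e i ^+ a i == 1)%g = [forall i : 'I_m, n %| a i].
Proof.
move=> le H a; pose a' i := if i < m then a i else 0%N.
have -> : (\prod_(i < m) e i ^+ a i = \prod_(i < r) e i ^+ a' i)%g.
  rewrite (big_ord_widen _ (fun i => e i ^+ a i) le) big_mkcond.
  by apply: eq_bigr => i _; rewrite /a'; case: ifP => _ //; rewrite expg0.
rewrite H; apply/forallP/forallP => h i.
  by have := h (widen_ord le i); rewrite /a' /= ltn_ord.
by rewrite /a'; case: ifP => lt; [exact: (h (Ordinal lt)) | exact: dvdn0].
Qed.

Lemma part2 (gT : finGroupType) (G : {group gT}) d :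
  abelian G -> 2 < d -> d %| exponent G -> Delta_star G (d - 2).
Proof.
move=> cG d3 dE.
have [x Gx ex] := exponent_witness (abelian_nil cG).
set q := #[x] %/ d.
have Ex : #[x] = (q * d)%N by rewrite /q divnK // -ex.
have q0 : 0 < q by move: (order_gt0 x); rewrite Ex muln_gt0 => /andP [].
have oy : #[x ^+ q] = d.
  by rewrite orderXdiv ?Ex ?mulKn // dvdn_mulr.
have := @core_minus gT G d 1 (d - 1) (fun _ => x ^+ q)%g cG
  (fun _ _ => groupX _ Gx) ltac:(lia).
move=> /(_ _ (fun i lt => hs_minus d3 lt) erefl erefl) /=.
rewrite ifT; last by lia.
apply; last by rewrite neq_ltn d3 orbT.
move=> a; rewrite big_ord1 -order_dvdn oy.
by apply/idP/forallP => [h i|h]; [rewrite (ord1 i)|exact: h ord0].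
Qed.


Lemma part3 n r : 1 < n -> 0 < r -> n <> r.+1 ->
  Delta_star [set: 'rV['Z_n]_r] (if r.+1 <= n then n - r.+1 else r.+1 - n).
Proof.
move=> n2 r0 nr.
pose e (i : nat) : 'rV['Z_n]_r := (\row_(j < r) ((j == i :> nat)%:R))%R.
have ind : forall a : nat -> nat,
    (\prod_(i < r) e i ^+ a i == 1) = [forall i : 'I_r, n %| a i].
  move=> a.
  have -> : \prod_(i < r) e i ^+ a i = (\sum_(i < r) e i *+ a i)%R.
    by apply: (big_rec2 (fun x y => x = y)) => // i x y _ ->.
  have M : forall j : 'I_r, (\sum_(i < r) e i *+ a i)%R ord0 j = ((a j)%:R)%R.
    move=> j; rewrite summxE (eq_bigr (fun i : 'I_r => ((j == i :> nat)%:R *+ a i)%R)); last first.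
      by move=> i _; rewrite mulmxnE mxE.
    rewrite (bigD1 j) //= eqxx big1 ?GRing.addr0 //.
    move=> i ne; rewrite (_ : (j == i :> nat) = false) ?GRing.mul0rn //.
    by apply/negbTE; rewrite eq_sym; apply: contra ne => /eqP E; apply/eqP/val_inj.
  apply/eqP/forallP => [H i|H].
    have := congr1 (fun A : 'rV['Z_n]_r => A ord0 i) H; rewrite /= M.
    rewrite (_ : (1%g : 'rV['Z_n]_r) ord0 i = 0%R); last by rewrite /= mxE.
    move/(congr1 (fun x : 'Z_n => nat_of_ord x)); rewrite val_Zp_nat // => E; rewrite /dvdn E.
  by [].
  rewrite (_ : (1%g : 'rV['Z_n]_r) = 0%R) //.
  apply/matrixP => i j; rewrite (ord1 i) M mxE.
  apply: val_inj; rewrite /= val_Zp_nat //; have := H j; rewrite /dvdn => /eqP ->.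
  done.
have cG : abelian [set: 'rV['Z_n]_r]%G by exact: FinRing.zmod_abelian.
have eG : forall i, i < r -> e i \in [set: 'rV['Z_n]_r]%G by move=> *; rewrite inE.
case h : (r.+1 <= n).
  have n3 : 2 < n by lia.
  have := @core_minus _ [set: 'rV['Z_n]_r]%G n r (n - 1) e cG eG n2 ind
    (fun i lt => hs_minus n3 lt) r0 erefl ltac:(by apply/eqP).
  by rewrite h.
have h' : n <= r by move/negbT: h; rewrite -ltnNge ltnS.
have le : (r.+2 - n <= r)%N by lia.
have m2 : 1 < r.+2 - n by lia.
have := @core_plus _ [set: 'rV['Z_n]_r]%G n (r.+2 - n) 1 e cG
  (fun i lt => eG i (leq_trans lt le)) n2 (ind_sub le ind)
  (fun i lt => @hs_plus n (r.+2 - n) i n2 m2 lt) m2 erefl.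
by rewrite (_ : r.+2 - n - 1 = r.+1 - n)%N //; lia.
Qed.

Lemma part1 (gT : finGroupType) (G : {group gT}) k :
  abelian G -> 1 <= k <= 'r(G) - 1 -> Delta_star G k.
Proof.
move=> cG /andP [k1 kr].
have [p pp rE] := rank_witness G.
have [E /pnElemP [sEG abE lE]] := p_rank_witness p G.
have rkE : 'r(E) = 'r(G) by rewrite (rank_abelem abE) lE.
have cE := abelem_abelian abE.
have [b defE tb] := abelian_structure cE.
rewrite (abelian_type_abelem abE) rkE in tb.
have szb : size b = 'r(G) by rewrite -(size_map order) tb size_nseq.
set r := 'r(G) in kr szb tb.
pose e (i : nat) := nth 1 b i.
have ob : forall i, i < r -> #[e i] = p.
  by move=> i lt; rewrite /e -(nth_map 1 0%N) ?szb // tb nth_nseq lt.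
have eE : forall i, i < r -> e i \in E.
  move=> i lt; have bx : e i \in b by rewrite mem_nth // szb.
  rewrite -(bigdprodWY defE); case/splitPr: bx => b1 b2.
  by rewrite big_cat big_cons /=; apply: mem_gen; rewrite !in_setU cycle_id /= orbT.
have ind : forall a : nat -> nat,
    (\prod_(i < r) e i ^+ a i == 1) = [forall i : 'I_r, p %| a i].
  move=> a; apply/eqP/forallP => [H i|H].
    have defE' : \big[dprod/1]_(i < r) <[e i]> = E.
      by move: defE; rewrite (big_nth 1) big_mkord szb.
    have [c [cF c1 cu]] := mem_bigdprod defE' (group1 E).
    have u1 := cu (fun i => e i ^+ a i) (fun i _ => mem_cycle _ _) (esym H) i isT.
    have u2 := cu (fun _ => 1) (fun i _ => group1 _) ltac:(by rewrite big1) i isT.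
    by rewrite -(ob i (ltn_ord i)) order_dvdn /= u1 -u2.
  by apply: big1 => i _; apply/eqP; rewrite -order_dvdn ob //; exact: H.
have le : k.+1 <= r by lia.
have k2 : 1 < k.+1 by lia.
have := @core_plus gT G p k.+1 1 e cG (fun i lt => subsetP sEG _ (eE i (leq_trans lt le)))
  (prime_gt1 pp) (ind_sub le ind) (fun i lt => @hs_plus p k.+1 i (prime_gt1 pp) k2 lt)
  k2 erefl.
by rewrite subn1.
Qed.

End Apps.

Theorem lemma6p17 (gT : finGroupType) (G : {group gT}) :
  abelian G -> 3 <= #|G| ->
  [/\ (* (1) [1, r(G) - 1] \subset Delta^*(G) *)
      (forall k, 1 <= k <= ('r(G))%g - 1 -> Delta_star G k),
      (* (2) d - 2 \in Delta^*(G) for d >= 3, d | exp(G) *)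
      (forall d, 3 <= d -> d %| exponent G -> Delta_star G (d - 2)),
      (* (3) |n - r - 1| \in Delta^*(C_n^r) for n >= 2, r >= 1, n <> r + 1 *)
      (forall n r : nat, 2 <= n -> 1 <= r -> n <> r.+1 ->
         Delta_star [set: 'rV['Z_n]_r] (if r.+1 <= n then n - r.+1 else r.+1 - n))
    & (* in particular, max Delta^*(G) >= max {r(G) - 1, exp(G) - 2} *)
      exists2 d, Delta_star G d & maxn (('r(G))%g - 1) (exponent G - 2) <= d].
Proof.
move=> cG G3; split.
- by move=> k hk; apply: part1.
- by move=> d d3 dE; apply: part2.
- by move=> n r n2 r1 nr; apply: part3.
have alt : 2 <= ('r(G))%g \/ 3 <= exponent G.
  case: (leqP 2 ('r(G))%g) => h; [by left|right].
  have cyc : cyclic G by rewrite abelian_rank1_cyclic // -ltnS.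
  by rewrite exponent_cyclic.
case: (leqP (exponent G - 2) (('r(G))%g - 1)) => h.
  have r2 : 2 <= ('r(G))%g by case: alt => // e3; lia.
  exists (('r(G))%g - 1); first by apply: part1 => //; apply/andP; split; lia.
  lia.
have e3 : 3 <= exponent G by lia.
exists (exponent G - 2); first by apply: part2.
lia.
Qed.
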